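(* Let $q$ be a prime power, let $\mathbf{C}\subseteq\mathbf{F}_q^n$ be a projective linear $[n,k]_q$ code with maximum weight $w\le n$, and let $h$ be a positive integer. Then the simplex complementary code of $\mathbf{C}$ of dimension $k+h$ has parameters $[\frac{q^{k+h}-1}{q-1}-n,\ k+h,\ q^{k+h-1}-w]_q$ and maximum weight $q^{k+h-1}$. When $h>\log_q w-k+2$, this simplex complementary code is a minimal code satisfying the Ashikhmin–Barg condition.
   Context: A linear $[n,k]_q$ code is projective if the columns $\mathbf{g}_1,\dots,\mathbf{g}_n$ of a generator matrix are nonzero and pairwise linearly independent. Simplex complementary code: set $K=k+h$ and regard $\mathbf{g}_1,\dots,\mathbf{g}_n$ as vectors of $\mathbf{F}_q^K$ by appending $h$ zero coordinates. Choose a set $P$ of representatives of all $\frac{q^K-1}{q-1}$ one-dimensional subspaces of $\mathbf{F}_q^K$ containing $\mathbf{g}_1,\dots,\mathbf{g}_n$. The simplex complementary code of $\mathbf{C}$ is the linear code generated by the $K\times(\frac{q^K-1}{q-1}-n)$ matrix whose columns are the elements of $P\setminus\{\mathbf{g}_1,\dots,\mathbf{g}_n\}$. A linear code is minimal if for all nonzero codewords $\mathbf{c},\mathbf{c}'$ with $supp(\mathbf{c}')\subseteq supp(\mathbf{c})$ there is $\lambda\in\mathbf{F}_q^*$ with $\mathbf{c}'=\lambda\mathbf{c}$. With $w_{min},w_{max}$ the minimum and maximum weights of nonzero codewords, the Ashikhmin–Barg condition is $w_{min}/w_{max}>(q-1)/q$. The notation $[n,k,d]_q$ means length $n$, dimension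 $k$, minimum distance $d$. *)

(* Defs.v *)
From Stdlib Require Import Rdefinitions Raxioms Rpower.
From HB Require Import structures.
From mathcomp Require Import all_boot all_order all_algebra all_field.
From mathcomp Require Import Rstruct.
Set Implicit Arguments. Unset Strict Implicit. Unset Printing Implicit Defensive.
Import Order.TTheory GRing.Theory Num.Theory.
Local Open Scope ring_scope.

Section Codes.
Variable F : finFieldType.

Definition supp n (c : 'rV[F]_n) : {set 'I_n} := [set j | c 0 j != 0].
Definition wt n (c : 'rV[F]_n) : nat := #|supp c|.

Definition codeword k n (M : 'M[F]_(k, n)) (c : 'rV[F]_n) : Prop :=
  exists x : 'rV[F]_k, c = x *m M.

Definition lin_indep2 K (u v : 'cV[F]_K) : Prop :=
  forall a b : F, a *: u + b *: v = 0 -> a = 0 /\ b = 0.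

Definition projective k n (M : 'M[F]_(k, n)) : Prop :=
  (forall j, col j M != 0) /\
  (forall i j, i != j -> lin_indep2 (col i M) (col j M)).

(* the columns of T form a set of representatives of all one-dimensional
   subspaces of F^K (each subspace represented exactly once) *)
Definition rep_system K N (T : 'M[F]_(K, N)) : Prop :=
  projective T /\
  (forall v : 'cV[F]_K, v != 0 -> exists j a, v = a *: col j T).

Definition is_minwt k n (M : 'M[F]_(k, n)) (d : nat) : Prop :=
  (exists c, codeword M c /\ c != 0 /\ wt c = d) /\
  (forall c, codeword M c -> c != 0 -> (d <= wt c)%N).
Definition is_maxwt k n (M : 'M[F]_(k, n)) (d : nat) : Prop :=
  (exists c, codeword M c /\ c != 0 /\ wt c = d) /\
  (forall c, codeword M c -> c != 0 -> (wt c <= d)%N).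

Definition minimal_code k n (M : 'M[F]_(k, n)) : Prop :=
  forall c c', codeword M c -> codeword M c' -> c != 0 -> c' != 0 ->
    supp c' \subset supp c -> exists2 l : F, l != 0 & c' = l *: c.

Definition ashikhmin_barg k n (M : 'M[F]_(k, n)) : Prop :=
  forall dmin dmax, is_minwt M dmin -> is_maxwt M dmax ->
    ((#|F|.-1)%:R / (#|F|)%:R < dmin%:R / dmax%:R :> rat).

End Codes.

Definition logR (b x : nat) : R := Rdiv (ln (INR x)) (ln (INR b)).

(* Main.v *)
Require Import Defs.
From Stdlib Require Import Reals.
From Stdlib Require Lra.
From Stdlib Require Import Rdefinitions Raxioms Rpower.
From HB Require Import structures.
From mathcomp Require Import all_boot all_order all_algebra all_field.
From mathcomp Require Import Rstruct.
From mathcomp Require Import zify ring lra.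
Import Order.TTheory GRing.Theory Num.Theory.
Local Open Scope ring_scope.

Section Gen.
Variable F : finFieldType.

Lemma wtE n (c : 'rV[F]_n) : wt c = \sum_(j < n) ((c 0 j != 0) : nat).
Proof.
rewrite /wt /supp -sum1_card big_mkcond /=; apply: eq_bigr => j _.
by rewrite inE; case: (c 0 j != 0).
Qed.

Lemma wt_row_mx n1 n2 (a : 'rV[F]_n1) (b : 'rV[F]_n2) :
  wt (row_mx a b) = (wt a + wt b)%N.
Proof.
rewrite !wtE big_split_ord; congr (_ + _)%N; apply: eq_bigr => j _.
  by rewrite row_mxEl.
by rewrite row_mxEr.
Qed.

Lemma wt_le n (c : 'rV[F]_n) : (wt c <= n)%N.
Proof. by rewrite /wt; apply: leq_trans (max_card _) _; rewrite card_ord. Qed.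

Lemma wt_eq0 n (c : 'rV[F]_n) : (wt c == 0)%N = (c == 0).
Proof.
apply/idP/idP => [|/eqP->]; last first.
  by rewrite wtE big1 // => j _; rewrite mxE eqxx.
rewrite /wt cards_eq0 => /eqP H; apply/eqP/matrixP => i j.
rewrite ord1 mxE; apply/eqP; apply: contraT => nz.
have : j \in supp c by rewrite inE.
by rewrite H inE.
Qed.

Lemma wt0 n : wt (0 : 'rV[F]_n) = 0%N.
Proof. by apply/eqP; rewrite wt_eq0. Qed.

Lemma minwt_uniq k n (M : 'M[F]_(k, n)) d1 d2 :
  is_minwt M d1 -> is_minwt M d2 -> d1 = d2.
Proof.
move=> [[c1 [C1 [n1 w1]]] H1] [[c2 [C2 [n2 w2]]] H2].
apply/eqP; rewrite eqn_leq; apply/andP; split; [rewrite -w2; exact: H1 | rewrite -w1; exact: H2].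
Qed.

Lemma maxwt_uniq k n (M : 'M[F]_(k, n)) d1 d2 :
  is_maxwt M d1 -> is_maxwt M d2 -> d1 = d2.
Proof.
move=> [[c1 [C1 [n1 w1]]] H1] [[c2 [C2 [n2 w2]]] H2].
apply/eqP; rewrite eqn_leq; apply/andP; split; [rewrite -w1; exact: H2 | rewrite -w2; exact: H1].
Qed.


Lemma rep_count K N (A : 'M[F]_(K, N)) (g : 'cV[F]_K -> bool) :
  rep_system A -> g 0 = false -> (forall a v, a != 0 -> g (a *: v) = g v) ->
  #|[set v | g v]| = (#|[set j | g (col j A)]| * #|F|.-1)%N.
Proof.
move=> [[nzc indep] span] g0 gZ.
pose D := setX [set j | g (col j A)] [set a : F | a != 0].
have cardD : #|D| = (#|[set j | g (col j A)]| * #|F|.-1)%N.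
  rewrite cardsX; congr (_ * _)%N; rewrite -(cardsC1 (0 : F)).
  by apply: eq_card => a; rewrite !inE.
rewrite -cardD -(card_in_imset (f := fun p : 'I_N * F => p.2 *: col p.1 A)).
  apply: eq_card => v; rewrite inE; apply/idP/imsetP.
  - move=> gv.
    have vnz : v != 0 by apply: contraTneq gv => ->; rewrite g0.
    have [j [a va]] := span v vnz.
    have anz : a != 0 by apply: contraNneq vnz => a0; rewrite va a0 scale0r.
    exists (j, a) => //=.
    by rewrite !inE /= anz andbT -(gZ a) // -va.
  - case=> [[j a]] /setXP[]; rewrite !inE /= => gj anz ->.
    by rewrite gZ.
move=> [j a] [j' b]; rewrite !inE /= => /andP[_ anz] /andP[_ bnz] /= E.
have jj : j = j'.
  apply/eqP; apply: contraT => neq.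
  have := indep j j' neq a (- b).
  rewrite scaleNr E subrr => /(_ erefl) [] a0 _.
  by move: anz; rewrite a0 eqxx.
subst j'; congr (_, _).
apply/eqP; rewrite -subr_eq0; apply/eqP.
have : (a - b) *: col j A = 0 by rewrite scalerBl E subrr.
by move/eqP; rewrite scaler_eq0 (negbTE (nzc j)) orbF => /eqP.
Qed.


Lemma ker_count K (x : 'rV[F]_K) : x != 0 ->
  muln #|[set v : 'cV[F]_K | (x *m v) 0 0 == 0]| #|F| = expn #|F| K.
Proof.
move=> xnz.
have : [exists i, x 0 i != 0].
  apply: contraNT xnz; rewrite negb_exists => /forallP H.
  by apply/eqP/matrixP => a b; rewrite ord1 mxE; apply/eqP/negbNE/H.
case/existsP => i xi.
pose f (v : 'cV[F]_K) : F := (x *m v) 0 0.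
have fD : forall u v, f (u + v) = f u + f v by move=> u v; rewrite /f mulmxDr mxE.
have fZ : forall a v, f (a *: v) = a * f v by move=> a v; rewrite /f -scalemxAr mxE.
pose v0 := (x 0 i)^-1 *: (delta_mx i 0 : 'cV[F]_K).
have fv0 : f v0 = 1 by rewrite fZ /f -colE mxE mulVf.
clearbody v0.
have : #|[set: 'cV[F]_K]| = #|setX [set v | f v == 0] [set: F]|.
  rewrite -(card_in_imset (f := fun p : 'cV[F]_K * F => p.1 + p.2 *: v0)).
    apply: eq_card => u; rewrite inE; symmetry; apply/imsetP.
    exists (u + (- f u) *: v0, f u).
      by rewrite !inE fD fZ fv0 mulr1 addrN eqxx.
    by rewrite /= scaleNr addrNK.
  move=> [u a] [u' b]; rewrite !inE /= => /andP[/eqP fu _] /andP[/eqP fu' _] E.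
  have ab : a = b.
    by have := congr1 f E; rewrite !fD !fZ fu fu' fv0 !add0r !mulr1.
  by subst b; congr (_, _); apply: addIr E.
by rewrite cardsT card_mx muln1 cardsX cardsT => ->.
Qed.


Lemma minimal_crit k n (M : 'M[F]_(k, n)) dmin dmax :
  (forall c, codeword M c -> c != 0 -> (dmin <= wt c)%N /\ (wt c <= dmax)%N) ->
  (#|F|.-1 * dmax < #|F| * dmin)%N -> minimal_code M.
Proof.
move=> Hw Hlt c c' [x ->] [x' ->] nz nz' sub.
have cwC : codeword M (x *m M) by exists x.
have cwC' : codeword M (x' *m M) by exists x'.
move: cwC cwC' nz nz' sub.
set C := x *m M; set C' := x' *m M => cwC cwC' nz nz' sub.
case: (pickP [pred l : F | (l != 0) && (C' == l *: C)]) => [l /andP[lnz /eqP E] | none].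
  by exists l.
exfalso.
have sumE : (\sum_(l : F) wt (C' - l *: C) = #|F|.-1 * wt C)%N.
  rewrite (eq_bigr (fun l : F => \sum_(j < n) ((C' 0 j - l * C 0 j != 0)%R : nat))%N); last first.
    by move=> l _; rewrite wtE; apply: eq_bigr => j _; rewrite !mxE.
  rewrite exchange_big wtE big_distrr /=; apply: eq_bigr => j _.
  case: (eqVneq (C 0 j) 0) => [cj0 | cjnz].
    have c'j0 : C' 0 j = 0.
      apply/eqP; apply: contraT => nzj.
      have : j \in supp C by apply: (subsetP sub); rewrite inE.
      by rewrite inE cj0 eqxx.
    by rewrite muln0 big1 // => l _; rewrite cj0 c'j0 mulr0 subrr eqxx.
  rewrite muln1 -(cardC1 (C' 0 j / C 0 j)) -sum1_card [in RHS]big_mkcond /=.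
  apply: eq_bigr => l _; rewrite !inE /=.
  have -> : (C' 0 j - l * C 0 j == 0) = (l == C' 0 j / C 0 j).
    apply/eqP/eqP => [E | ->]; last by rewrite divfK // subrr.
    by rewrite (subr0_eq E) mulfK.
  by case: (l == _).
rewrite (bigD1 0) //= scale0r subr0 in sumE.
have Hs : (#|F|.-1 * dmin <= \sum_(l : F | l != 0%R) wt (C' - l *: C)%R)%N.
  rewrite -(cardC1 (0 : F)) -sum_nat_const; apply: leq_sum => l lnz.
  apply: (Hw _ _ _).1.
    by exists (x' - l *: x); rewrite mulmxBl -scalemxAl.
  rewrite subr_eq0; apply/negP => E; have := none l; rewrite /= E andbT => l0.
  by move: lnz; rewrite inE l0.
have [dC' _] := Hw _ cwC' nz'.
have [_ dC] := Hw _ cwC nz.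
have q0 : (0 < #|F|)%N by apply/card_gt0P; exists 0.
have E : #|F| = #|F|.-1.+1 by rewrite prednK.
move: Hlt; rewrite {2}E => Hlt.
have H4 := leq_mul (leqnn #|F|.-1) dC.
move: sumE Hs dC' H4 Hlt.
set r := #|F|.-1.
set S := (\sum_(l : F | l != 0%R) _)%N.
move=> h1 h2 h3 h4 h5; nia.
Qed.

End Gen.

Lemma INR_expn (q n : nat) : INR (q ^ n) = pow (INR q) n.
Proof.
elim: n => [|n IH]; first by rewrite expn0.
by rewrite expnS -multE mult_INR IH /=.
Qed.
Lemma logR_lt (q w K : nat) : (1 < q)%N -> (0 < w)%N ->
  Rlt (logR q w) (INR K) -> (w < q ^ K)%N.
Proof.
move=> q1 w0 H.
have Hq : Rlt 1 (INR q) by apply: (lt_INR 1); apply/ssrnat.ltP.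
have Hw : Rlt 0 (INR w) by apply: (lt_INR 0); apply/ssrnat.ltP.
have lq : Rlt 0 (ln (INR q)).
  by rewrite -ln_1; apply: ln_increasing; Lra.lra.
rewrite /logR in H.
have H2 : Rlt (ln (INR w)) (Rmult (INR K) (ln (INR q))).
  have := Rmult_lt_compat_r _ _ _ lq H.
  rewrite /Rdiv Rmult_assoc Rinv_l; last Lra.lra.
  by rewrite Rmult_1_r.
rewrite -ln_pow in H2; last Lra.lra.
have := ln_lt_inv _ _ Hw (pow_lt (INR q) K ltac:(Lra.lra)) H2.
rewrite -INR_expn => /INR_lt /ssrnat.ltP //.
Qed.

Theorem theorem3p1 (F : finFieldType) (n k h w m : nat)
  (G : 'M[F]_(k, n)) (S : 'M[F]_(k + h, m)) :
  projective G -> \rank G = k -> is_maxwt G w -> (0 < h)%N ->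
  rep_system (row_mx (col_mx G (0 : 'M[F]_(h, n))) S) ->
  [/\ m = ((#|F| ^ (k + h) - 1) %/ (#|F| - 1) - n)%N,
      \rank S = (k + h)%N,
      is_minwt S (#|F| ^ (k + h - 1) - w)%N,
      is_maxwt S (#|F| ^ (k + h - 1))%N &
      (logR #|F| w - k%:R + 2 < h%:R :> R ->
         minimal_code S /\ ashikhmin_barg S)].
Proof.
move=> projG rkG [[c0 [[y Ey] [c0nz wc0]]] maxG] h0 rep.
subst c0.
have q1 : (1 < #|F|)%N := card_finNzRing_gt1 F.
have kpos : (0 < k)%N.
  rewrite lt0n; apply/eqP => k0.
  have y0 : y = 0 by apply/matrixP => i j; have := ltn_ord j; rewrite [X in (_ < X)%N]k0.
  by move: c0nz; rewrite y0 mul0mx eqxx.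
set A := row_mx (col_mx G 0) S in rep.
have Hn : ((#|F| ^ (k + h)).-1 = (n + m) * #|F|.-1)%N.
  have := @rep_count F _ _ A (fun v => v != 0) rep.
  rewrite eqxx => /(_ erefl) H.
  move: H; rewrite (_ : #|[set v | v != 0]| = (#|F| ^ (k + h)).-1); last first.
    transitivity #|[set~ (0 : 'cV[F]_(k + h))]|.
      by apply: eq_card => v; rewrite !inE.
    by rewrite cardsC1 card_mx muln1.
  rewrite (_ : #|[set j | col j A != 0]| = (n + m)%N); last first.
    by rewrite -[RHS]card_ord; apply: eq_card => j; rewrite inE rep.1.1.
  move=> H; apply: H; move=> a v anz; by rewrite scaler_eq0 negb_or anz.
have q0 : (0 < #|F|)%N by apply: ltnW.
have q10 : (0 < #|F|.-1)%N by rewrite -subn1 subn_gt0.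
have EK : (#|F| ^ (k + h) = #|F| * #|F| ^ (k + h - 1))%N.
  by rewrite -expnS; congr expn; lia.
set P := (#|F| ^ (k + h - 1))%N in EK *.
have Hx : forall x : 'rV[F]_(k + h), x != 0 ->
    (wt (lsubmx x *m G) + wt (x *m S) = P)%N.
  move=> x xnz.
  have kc := @ker_count F _ x xnz.
  have g0 : ((x *m (0 : 'cV[F]_(k + h))) 0 0 != 0) = false.
    by rewrite mulmx0 mxE eqxx.
  have gZ : forall a (v : 'cV[F]_(k + h)), a != 0 ->
      ((x *m (a *: v)) 0 0 != 0) = ((x *m v) 0 0 != 0).
    by move=> a v anz; rewrite -scalemxAr mxE mulf_eq0 negb_or anz.
  have cnt := @rep_count F _ _ A (fun v => (x *m v) 0 0 != 0) rep g0 gZ.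
  have compl : addn #|[set v : 'cV[F]_(k + h) | (x *m v) 0 0 == 0]|
                #|[set v : 'cV[F]_(k + h) | (x *m v) 0 0 != 0]| = expn #|F| (k + h).
    transitivity #|[set: 'cV[F]_(k + h)]|; last by rewrite cardsT card_mx muln1.
    rewrite cardsT -(cardsC [set v : 'cV[F]_(k + h) | (x *m v) 0 0 == 0]).
    by congr (_ + _)%N; apply: eq_card => v; rewrite !inE.
  have wtA : wt (x *m A) = #|[set j | (x *m col j A) 0 0 != 0]|.
    rewrite /wt /supp; apply: eq_card => j; rewrite !inE !mxE.
    by congr (_ != _); apply: eq_bigr => i _; rewrite !mxE.
  have wtA2 : wt (x *m A) = (wt (lsubmx x *m G) + wt (x *m S))%N.
    rewrite /A mul_mx_row wt_row_mx; congr (_ + _)%N; congr wt.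
    by rewrite -{1}[x]hsubmxK mul_row_col mulmx0 addr0.
  rewrite -wtA2 wtA.
  move: kc compl cnt.
  set Z := #|[set v : 'cV[F]_(k + h) | (x *m v) 0 0 == 0]|.
  set NZ := #|[set v : 'cV[F]_(k + h) | (x *m v) 0 0 != 0]|.
  set J := #|[set j | (x *m col j A) 0 0 != 0]|.
  move=> kc compl cnt.
  have ZP : Z = P by apply/eqP; rewrite -(eqn_pmul2r q0) kc EK mulnC.
  apply/eqP; rewrite -(eqn_pmul2r q10) -cnt.
  have -> : #|F|.-1 = (#|F| - 1)%N by rewrite subn1.
  apply/eqP; rewrite mulnBr muln1; lia.
pose e := delta_mx 0 (Ordinal h0) : 'rV[F]_h.
pose xe := row_mx (0 : 'rV[F]_k) e.
have xenz : xe != 0.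
  apply/eqP => /matrixP /(_ 0 (rshift k (Ordinal h0))).
  rewrite row_mxEr !mxE !eqxx /= => /eqP.
  by rewrite oner_eq0.
have wte : wt (xe *m S) = P.
  by have := Hx xe xenz; rewrite row_mxKl mul0mx wt0.
have Pm : (P <= m)%N by rewrite -wte wt_le.
have wn : (w <= n)%N by rewrite -wc0 wt_le.
have w0 : (0 < w)%N by rewrite lt0n -wc0 wt_eq0.
have nP : (n < P)%N.
  have E : #|F| = #|F|.-1.+1 by rewrite prednK.
  move: Hn; rewrite EK {1}E.
  have := leq_mul Pm (leqnn #|F|.-1).
  set r := #|F|.-1 => h1 h2.
  nia.
have nz0 : forall x : 'rV[F]_(k + h), x *m S != 0 -> x != 0.
  by move=> x; apply: contraNneq => ->; rewrite mul0mx.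
have minS : is_minwt S (P - w).
  split.
    have ynz : row_mx y (0 : 'rV[F]_h) != 0.
      apply: contraNneq c0nz => E.
      by move: E; rewrite -row_mx0 => /eq_row_mx [-> _]; rewrite mul0mx.
    have := Hx _ ynz; rewrite row_mxKl wc0 => H.
    exists (row_mx y 0 *m S); split; first by exists (row_mx y 0).
    split; last by lia.
    by rewrite -wt_eq0; lia.
  move=> c [x ->] cnz.
  have := Hx x (nz0 _ cnz).
  have : (wt (lsubmx x *m G) <= w)%N.
    case: (eqVneq (lsubmx x *m G) 0) => [->|nz]; first by rewrite wt0.
    by apply: maxG => //; exists (lsubmx x).
  lia.
have maxS : is_maxwt S P.
  split.
    exists (xe *m S); split; first by exists xe.
    by split; [rewrite -wt_eq0 wte; lia | exact: wte].
  move=> c [x ->] cnz.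
  have := Hx x (nz0 _ cnz); lia.
have rkS : \rank S = (k + h)%N.
  apply/eqP; apply: inj_row_free => v vS.
  apply/eqP; apply: contraT => vnz.
  have := Hx v vnz; rewrite vS wt0 addn0 => E.
  have := @wt_le F _ (lsubmx v *m G); rewrite E => H.
  by move: (leq_trans nP H); rewrite ltnn.
split => //.
  by rewrite !subn1 Hn mulnK // addKn.
move=> HR.
have HR' : (logR #|F| w < ((k + h - 2)%N)%:R :> R).
  have HR2 : logR #|F| w - (k%:R : R) + 2%:R < (h%:R : R) := HR.
  rewrite natrB ?natrD; last lia.
  suff H3 : logR #|F| w < (k%:R : R) + h%:R - 2%:R by exact: H3.
  move: HR2; generalize (logR #|F| w) (k%:R : R) (h%:R : R) => a b c H.
  lra.
have wQ : (w < #|F| ^ (k + h - 2))%N.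
  apply: logR_lt => //.
  by move/RltP: HR'; rewrite -INRE.
have PQ : P = (#|F| * #|F| ^ (k + h - 2))%N.
  by rewrite /P -expnS; congr expn; lia.
have Hlt : (#|F|.-1 * P < #|F| * (P - w))%N.
  rewrite PQ -subn1; move: wQ q1.
  set Q := (#|F| ^ (k + h - 2))%N; set q := #|F| => wQ' q1'.
  have a1 : (q * w < q * Q)%N by rewrite ltn_pmul2l //; lia.
  have a2 : (q * Q <= q * (q * Q))%N by rewrite leq_pmull //; lia.
  rewrite mulnBr mulnBl mul1n.
  move: a1 a2; generalize (q * w)%N (q * Q)%N (q * (q * Q))%N => a b c.
  lia.
split.
  apply: (@minimal_crit F _ _ S (P - w) P) => // c cw cnz.
  by split; [exact: minS.2 | exact: maxS.2].
move=> dmin dmax Hmin Hmax.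
rewrite (@minwt_uniq F _ _ S _ _ Hmin minS) (@maxwt_uniq F _ _ S _ _ Hmax maxS).
have P0 : (0 < P)%N by lia.
rewrite ltr_pdivlMr ?ltr0n // mulrAC ltr_pdivrMr ?ltr0n // -!natrM ltr_nat.
by rewrite [X in (_ < X)%N]mulnC.
Qed.
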